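(* Let $X$ be a compact topological space equipped with a continuous action of a sofic monoid $M$, let $\Sigma=(D_i,\sigma_i)_{i\in I}$ be a sofic approximation of $M$ with $\lim_{i\in I}|D_i|=\infty$, and let $\rho$ be a continuous pseudometric on $X$. Then $$h_\Sigma(X,M,\rho)=\sup_{\varepsilon>0}\inf_F\inf_{\delta>0}\limsup_{i\in I}\frac{1}{|D_i|}\log N_\varepsilon(\operatorname{Map}(X,M,\rho,F,\delta,\sigma_i),\rho_2^{D_i}),$$ where $\inf_F$ is over all finite subsets $F\subset M$.
   Context: Hamming metric on $\operatorname{Map}(D)$ (maps $D\to D$, $D$ finite non-empty): $d_D^{\mathrm{Ham}}(f,g)=\frac{1}{|D|}|\{v:f(v)\ne g(v)\}|$. A sofic approximation of a monoid $M$ is a net $(D_i,\sigma_i)_{i\in I}$ over a directed set, $D_i$ non-empty finite, $\sigma_i\colon M\to\operatorname{Map}(D_i)$, with $\sigma_i(1_M)=\mathrm{Id}_{D_i}$, $\lim_i d^{\mathrm{Ham}}_{D_i}(\sigma_i(m_1m_2),\sigma_i(m_1)\sigma_i(m_2))=0$ for all $m_1,m_2$, and $\lim_i d^{\mathrm{Ham}}_{D_i}(\sigma_i(m_1),\sigma_i(m_2))=1$ for all distinct $m_1,m_2$; $M$ is sofic iff it admits one. For non-empty finite $D$, on $X^D$ set $\rho_2^D(\varphi,\psi)=(\frac{1}{|D|}\sum_{v\in D}\rho(\varphi(v),\psi(v))^2)^{1/2}$, $\rho_\infty^D(\varphi,\psi)=\max_{v}\rho(\varphi(v),\psi(v))$,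 and $(m\varphi)(v)=m\varphi(v)$. For finite $F\subset M$, $\delta>0$, $\sigma\colon M\to\operatorname{Map}(D)$: $\operatorname{Map}(X,M,\rho,F,\delta,\sigma)=\{\varphi\in X^D:\rho_2^D(\varphi\circ\sigma(m),m\varphi)\le\delta\ \forall m\in F\}$. $N_\varepsilon(Z,d)$ is the maximal cardinality of a subset of $Z$ with pairwise $d$-distances $\ge\varepsilon$. The sofic topological entropy is $h_\Sigma(X,M,\rho)=\sup_{\varepsilon>0}\inf_F\inf_{\delta>0}\limsup_i\frac{1}{|D_i|}\log N_\varepsilon(\operatorname{Map}(X,M,\rho,F,\delta,\sigma_i),\rho_\infty^{D_i})$ ($\log 0=-\infty$). *)

(* Defs.v *)
From HB Require Import structures.
From mathcomp Require Import all_boot all_order all_algebra.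
From mathcomp Require Import all_classical all_reals all_analysis.
Set Implicit Arguments. Unset Strict Implicit. Unset Printing Implicit Defensive.
Import Order.TTheory GRing.Theory Num.Theory numFieldNormedType.Exports.
Local Open Scope classical_set_scope.
Local Open Scope ring_scope.

Definition is_monoid (M : Type) (mul : M -> M -> M) (one : M) : Prop :=
  [/\ (forall a b c, mul a (mul b c) = mul (mul a b) c),
      (forall a, mul one a = a) & (forall a, mul a one = a)].

Definition is_cont_action (M : Type) (mul : M -> M -> M) (one : M)
  (X : topologicalType) (act : M -> X -> X) : Prop :=
  [/\ act one = id,
      (forall m1 m2, act (mul m1 m2) = act m1 \o act m2)
    & (forall m, continuous (act m))].

Definition is_cont_pseudometric (R : realType) (X : topologicalType)
  (rho : X -> X -> R) : Prop :=
  [/\ (forall x y, 0 <= rho x y), (forall x, rho x x = 0),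
      (forall x y, rho x y = rho y x),
      (forall x y z, rho x z <= rho x y + rho y z)
    & continuous (fun p : X * X => rho p.1 p.2)].

Definition is_directed (I : Type) (le : I -> I -> Prop) : Prop :=
  [/\ inhabited I, (forall i, le i i),
      (forall i j k, le i j -> le j k -> le i k)
    & (forall i j, exists k, le i k /\ le j k)].

Definition net_lim (R : realType) (I : Type) (le : I -> I -> Prop)
  (a : I -> R) (L : R) : Prop :=
  forall e : R, 0 < e -> exists i0, forall i, le i0 i -> `|a i - L| < e.

Definition net_card_to_infty (I : Type) (le : I -> I -> Prop) (D : I -> finType) : Prop :=
  forall N : nat, exists i0, forall i, le i0 i -> (N < #|D i|)%N.

Definition net_limsup (R : realType) (I : Type) (le : I -> I -> Prop)
  (a : I -> \bar R) : \bar R :=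
  ereal_inf [set ereal_sup [set a j | j in [set j | le i j]] | i in [set: I]].

Definition ham_dist (R : realType) (D : finType) (f g : D -> D) : R :=
  (#|[set v | f v != g v]|%:R) / (#|D|%:R).

Definition is_sofic_approx (R : realType) (M : Type) (mul : M -> M -> M) (one : M)
  (I : Type) (le : I -> I -> Prop) (D : I -> finType)
  (sigma : forall i, M -> D i -> D i) : Prop :=
  [/\ is_directed le,
      (forall i, (0 < #|D i|)%N),
      (forall i, sigma i one = id),
      (forall m1 m2, net_lim le
          (fun i => ham_dist R (sigma i (mul m1 m2)) (sigma i m1 \o sigma i m2)) 0)
    & (forall m1 m2, m1 <> m2 ->
          net_lim le (fun i => ham_dist R (sigma i m1) (sigma i m2)) 1)].

Definition rho2 (R : realType) (X : Type) (rho : X -> X -> R) (D : finType)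
  (phi psi : D -> X) : R :=
  Num.sqrt ((#|D|%:R)^-1 * \sum_(v : D) rho (phi v) (psi v) ^+ 2).

Definition rhoinf (R : realType) (X : Type) (rho : X -> X -> R) (D : finType)
  (phi psi : D -> X) : R :=
  \big[Num.max/0]_(v : D) rho (phi v) (psi v).

Definition MapSet (R : realType) (M X : Type) (act : M -> X -> X) (rho : X -> X -> R)
  (F : set M) (delta : R) (D : finType) (sigma : M -> D -> D) : set (D -> X) :=
  [set phi : D -> X | forall m, F m ->
     rho2 rho (fun v => phi (sigma m v)) (fun v => act m (phi v)) <= delta].

(** N_eps(Z, d): maximal cardinality of an eps-separated subset of Z
    (a subset with n elements is given by an injective enumeration 'I_n -> T;
    +oo if arbitrarily large finite separated subsets exist). *)
Definition sep_number (R : realType) (T : Type) (Z : set T) (d : T -> T -> R)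
  (eps : R) : \bar R :=
  ereal_sup [set (n%:R)%:E | n in
    [set n : nat | exists phi : 'I_n -> T,
       (forall j, Z (phi j)) /\ (forall j k, j != k -> eps <= d (phi j) (phi k))]].

Definition elog (R : realType) (x : \bar R) : \bar R :=
  match x with
  | EFin r => if r <= 0 then -oo%E else (ln r)%:E
  | EPInf => +oo%E
  | ENInf => -oo%E
  end.

Definition sofic_entropy_with (R : realType) (M X : Type) (act : M -> X -> X)
  (rho : X -> X -> R) (I : Type) (le : I -> I -> Prop) (D : I -> finType)
  (sigma : forall i, M -> D i -> D i)
  (d : forall D : finType, (D -> X) -> (D -> X) -> R) : \bar R :=
  ereal_sup [set
    ereal_inf [set
      ereal_inf [set
        net_limsup le (fun i =>
          ((#|D i|%:R)^-1)%:E *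
          elog (sep_number (MapSet act rho F delta (sigma i)) (@d (D i)) eps))%E
      | delta in [set delta : R | 0 < delta]]
    | F in [set F : set M | finite_set F]]
  | eps in [set eps : R | 0 < eps]].

Definition sofic_top_entropy (R : realType) (M X : Type) (act : M -> X -> X)
  (rho : X -> X -> R) (I : Type) (le : I -> I -> Prop) (D : I -> finType)
  (sigma : forall i, M -> D i -> D i) : \bar R :=
  sofic_entropy_with act rho le sigma (fun D' => @rhoinf R X rho D').

(* Main.v *)
Require Import Defs.
From HB Require Import structures.
From mathcomp Require Import all_boot all_order all_algebra.
From mathcomp Require Import all_classical all_reals all_analysis.
From mathcomp Require Import ring lra.
Import Order.TTheory GRing.Theory Num.Theory numFieldNormedType.Exports.
Local Open Scope classical_set_scope.
Local Open Scope ring_scope.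
Set Implicit Arguments. Unset Strict Implicit. Unset Printing Implicit Defensive.
Section Ereal.
Variable R : realType.
Local Open Scope ereal_scope.

Lemma sup_shift (T : Type) (A : set T) (f g : T -> \bar R) (c : R) :
  (forall x, A x -> f x <= g x + c%:E) ->
  ereal_sup [set f x | x in A] <= ereal_sup [set g x | x in A] + c%:E.
Proof.
move=> H; apply: ge_ereal_sup => _ [x Ax <-].
apply: le_trans (H x Ax) _; apply: leeD2r.
by apply: ereal_sup_ubound; exists x.
Qed.

Lemma inf_shift (T : Type) (A : set T) (f g : T -> \bar R) (c : R) :
  (forall x, A x -> f x <= g x + c%:E) ->
  ereal_inf [set f x | x in A] <= ereal_inf [set g x | x in A] + c%:E.
Proof.
move=> H; rewrite -leeBlDr //; apply: le_ereal_inf_tmp => _ [x Ax <-].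
rewrite leeBlDr //; apply: le_trans (H x Ax); apply: ereal_inf_lbound.
by exists x.
Qed.

Lemma limsup_shift (I : Type) (le : I -> I -> Prop) (a b : I -> \bar R) (c : R) :
  (forall i, a i <= b i + c%:E) ->
  net_limsup le a <= net_limsup le b + c%:E.
Proof.
move=> H; apply: inf_shift => i _; exact: sup_shift.
Qed.

Lemma elog_step (n : R) (N1 N2 : \bar R) (C eta : R) : (0 < n)%R -> 0 <= N2 ->
  N1 <= N2 * C%:E -> (0 < C)%R -> (ln C <= eta * n)%R ->
  (n^-1)%:E * elog N1 <= (n^-1)%:E * elog N2 + eta%:E.
Proof.
move=> n0 N20 H C0 hC.
have ni0 : (0 < n^-1)%R by rewrite invr_gt0.
have lhsNy : forall x, elog x = -oo -> (n^-1)%:E * elog x = -oo.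
  by move=> x ->; rewrite mulrNy gtr0_sg // mul1e.
case: N2 N20 H => [r| |] //; last first.
  by move=> _ _; rewrite /= mulry gtr0_sg // mul1e addye // leey.
rewrite lee_fin => r0; case: N1 => [s| |] //=; last first.
  by move=> _; rewrite mulrNy gtr0_sg // mul1e leNye.
rewrite lee_fin => sr.
case: ifPn => s0; first by rewrite mulrNy gtr0_sg // mul1e leNye.
rewrite -ltNge in s0.
have rp : (0 < r)%R.
  rewrite lt0r r0 andbT; apply/negP => /eqP r00.
  by move: sr; rewrite r00 mul0r leNgt s0.
have -> : (r <= 0)%R = false by rewrite leNgt rp.
rewrite -!EFinM -EFinD lee_fin.
have : (ln s <= ln r + eta * n)%R.
  apply: le_trans (_ : ln (r * C) <= _)%R.
    by rewrite ler_ln // posrE mulr_gt0.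
  by rewrite lnM ?posrE //; apply: lerD.
move=> h; rewrite -[X in (_ <= _ + X)%R](mulKf (lt0r_neq0 n0)) -mulrDr.
by rewrite ler_pM2l // [(n * eta)%R]mulrC.
Qed.
End Ereal.
Definition pointedT (X : topologicalType) (x0 : X) : Type := X.
HB.instance Definition _ (X : topologicalType) (x0 : X) := Topological.copy (@pointedT X x0) X.
HB.instance Definition _ (X : topologicalType) (x0 : X) := isPointed.Build (@pointedT X x0) x0.
Lemma cover_compact_of (X : topologicalType) : compact [set: X] -> cover_compact [set: X].
Proof.
move=> cpt.
have [x0|nx] := pselect (exists x : X, True).
  case: x0 => x0 _.
  have : @compact (@pointedT X x0) [set: X] by exact: cpt.
  rewrite compact_cover; exact.
move=> I D f _ _; exists (@finmap.fset0 I) => //.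
move=> x _; exfalso; apply: nx; by exists x.
Qed.
Section Count.
Variable R : realType.
Lemma count_G (D : finType) (K : nat) (t kap : R) : 0 < t ->
  (#|[pred g : {ffun D -> 'I_K.+1} | (#|[pred v | g v != ord0]|%:R < kap * #|D|%:R)]|%:R : R)
   <= expR (t * kap * #|D|%:R) * (1 + K%:R * expR (- t)) ^+ #|D|.
Proof.
move=> t0.
set x := expR (-t); set G := [pred g | _].
pose w0 (j : 'I_K.+1) : R := if j != ord0 then x else 1.
have x0 : 0 < x by apply: expR_gt0.
have w0ge : forall j, 0 <= w0 j.
  by move=> j; rewrite /w0; case: ifP => _; [exact: ltW|exact: ler01].
have hw : forall g : {ffun D -> 'I_K.+1}, \prod_v w0 (g v) = x ^+ #|[pred v | g v != ord0]|.
  move=> g; rewrite /w0 -big_mkcond /=.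
  by rewrite -prodr_const; apply: eq_bigl => v; rewrite inE.
have hsum : \sum_(g : {ffun D -> 'I_K.+1}) \prod_v w0 (g v) = (1 + K%:R * x) ^+ #|D|.
  rewrite -(bigA_distr_bigA (fun (v : D) (j : 'I_K.+1) => w0 j)) /=.
  have -> : \sum_(j < K.+1) w0 j = 1 + K%:R * x.
    rewrite big_ord_recl /w0 eqxx /=.
    rewrite (eq_bigr (fun _ => x)); last by [].
    by rewrite sumr_const card_ord mulr_natl.
  by rewrite prodr_const.
have h1 : #|G|%:R * expR (- (t * kap * #|D|%:R)) <= \sum_(g in G) \prod_v w0 (g v).
  rewrite mulr_natl -sumr_const; apply: ler_sum => g; rewrite inE => hg.
  rewrite hw /x -expRM_natr ler_expR mulNr lerN2 -mulrA ler_pM2l //.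
  exact: ltW.
have h2 : \sum_(g in G) \prod_v w0 (g v) <= \sum_(g : {ffun D -> 'I_K.+1}) \prod_v w0 (g v).
  rewrite big_mkcond /=; apply: ler_sum => g _; case: ifP => _ //.
  by apply: prodr_ge0 => v _; exact: w0ge.
have := le_trans h1 h2; rewrite hsum.
by rewrite expRN ler_pdivrMr ?expR_gt0 // mulrC.
Qed.
End Count.
Section Rho.
Variables (R : realType) (X : topologicalType) (rho : X -> X -> R).
Hypothesis rho_ge0 : forall x y, 0 <= rho x y.
Hypothesis rho_refl : forall x, rho x x = 0.
Hypothesis rho_sym : forall x y, rho x y = rho y x.
Hypothesis rho_tri : forall x y z, rho x z <= rho x y + rho y z.

Lemma rho_le_inf (D : finType) (phi psi : D -> X) v :
  rho (phi v) (psi v) <= rhoinf rho phi psi.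
Proof.
rewrite /rhoinf (bigD1 v) //=; by rewrite le_max lexx.
Qed.

Lemma rhoinf_lt (D : finType) (phi psi : D -> X) e : 0 < e ->
  (forall v, rho (phi v) (psi v) < e) -> rhoinf rho phi psi < e.
Proof.
move=> e0 H; rewrite /rhoinf; apply: (big_ind (fun x => x < e)) => //.
by move=> a b ha hb; rewrite gt_max ha hb.
Qed.

Lemma rhoinf_ge0 (D : finType) (phi psi : D -> X) : 0 <= rhoinf rho phi psi.
Proof.
rewrite /rhoinf; apply: (big_ind (fun x => 0 <= x)) => //.
by move=> a b ha hb; rewrite le_max ha.
Qed.

Lemma rho2_le_inf (D : finType) (phi psi : D -> X) : (0 < #|D|)%N ->
  rho2 rho phi psi <= rhoinf rho phi psi.
Proof.
move=> D0; rewrite /rho2.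
have m0 := rhoinf_ge0 phi psi.
rewrite -(ger0_norm m0) -sqrtr_sqr ler_sqrt ?exprn_ge0 //.
have n0 : 0 < (#|D|%:R : R) by rewrite ltr0n.
rewrite ler_pdivrMl //.
apply: (@le_trans _ _ (\sum_(v : D) rhoinf rho phi psi ^+ 2)).
  by apply: ler_sum => v _; rewrite lerXn2r ?rho_le_inf ?nnegrE //.
by rewrite sumr_const mulr_natl.
Qed.

Lemma rho2_refl (D : finType) (phi : D -> X) : rho2 rho phi phi = 0.
Proof.
rewrite /rho2 big1 ?mulr0 ?sqrtr0 // => v _; by rewrite rho_refl expr0n.
Qed.

Lemma rho2_sym (D : finType) (phi psi : D -> X) : rho2 rho phi psi = rho2 rho psi phi.
Proof. by rewrite /rho2; congr (Num.sqrt (_ * _)); apply: eq_bigr => v _; rewrite rho_sym. Qed.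

Hypothesis rho_cont : continuous (fun p : X * X => rho p.1 p.2).

Lemma cover_idx (e : R) : 0 < e -> compact [set: X] ->
  exists K (idx : X -> 'I_K), forall y z, idx y = idx z -> rho y z < e.
Proof.
move=> e0 /cover_compact_of cpt.
have e20 : 0 < e / 2 by rewrite divr_gt0.
have := cpt X setT (fun c => [set y | rho c y < e / 2]).
case.
- move=> c _.
  have -> : [set y | rho c y < e / 2] = (fun y => rho c y) @^-1` [set r | r < e / 2] by [].
  apply: open_comp; last exact: open_lt.
  move=> y _.
  apply: (@continuous_comp _ _ _ (fun y : X => (c, y)) (fun p : X * X => rho p.1 p.2)).
    by apply: cvg_pair; [exact: cvg_cst | exact: cvg_id].
  exact: rho_cont.
- by move=> y _; exists y => //=; rewrite rho_refl.
move=> D' _ cov.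
pose s := in_tuple (finmap.enum_fset D').
have H : forall y, exists i : 'I_(size (finmap.enum_fset D')), rho (tnth s i) y < e / 2.
  move=> y; have [c /= cD hc] := cov y I.
  have cs : c \in finmap.enum_fset D' by [].
  have hi : (index c (finmap.enum_fset D') < size (finmap.enum_fset D'))%N by rewrite index_mem.
  exists (Ordinal hi); by rewrite (tnth_nth c) /= nth_index.
exists (size (finmap.enum_fset D')), (fun y => proj1_sig (cid (H y))).
move=> y z hyz.
have := proj2_sig (cid (H y)); have := proj2_sig (cid (H z)).
rewrite -hyz => hz hy.
apply: le_lt_trans (rho_tri _ (tnth s (proj1_sig (cid (H y)))) _) _.
rewrite rho_sym; apply: lt_le_trans (ltrD hy hz) _; by rewrite -splitr.
Qed.

Lemma core (e eta : R) : 0 < e -> 0 < eta -> compact [set: X] ->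
  exists2 e' : R, 0 < e' & forall (D : finType) (N : nat) (phi : 'I_N -> D -> X),
    (0 < #|D|)%N -> (forall j k, j != k -> e <= rhoinf rho (phi j) (phi k)) ->
    exists S : {set 'I_N},
      (forall j k, j \in S -> k \in S -> j != k -> e' <= rho2 rho (phi j) (phi k))
      /\ N%:R <= #|S|%:R * expR (eta * #|D|%:R).
Proof.
move=> e0 eta0 cpt.
have [K [idx hidx]] := cover_idx e0 cpt.
pose t := 2 * K%:R / eta + 1.
have t0 : 0 < t.
  rewrite /t; apply: lt_le_trans ltr01 _.
  by rewrite lerDr divr_ge0 ?mulr_ge0 ?ler0n ?ltW.
pose kap := eta / (2 * t).
have kap0 : 0 < kap by rewrite divr_gt0 ?mulr_gt0.
have e20 : 0 < e / 2 by rewrite divr_gt0.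
pose a := kap * (e / 2) ^+ 2.
have a0 : 0 < a by rewrite mulr_gt0 ?exprn_gt0.
exists (Num.sqrt a); first by rewrite sqrtr_gt0.
move=> D N phi D0 sep.
have n0 : 0 < (#|D|%:R : R) by rewrite ltr0n.
pose sepb (A : {set 'I_N}) := [forall j in A, forall k in A,
   (j != k) ==> (Num.sqrt a <= rho2 rho (phi j) (phi k))].
have sep0 : sepb finset.set0 by apply/forall_inP => j; rewrite inE.
case: (arg_maxnP (fun A : {set 'I_N} => #|A|) sep0) => S sepS maxS.
have hex : forall j, [exists k in S, rho2 rho (phi j) (phi k) < Num.sqrt a].
  move=> j; case: (boolP [exists k in S, _]) => // /exists_inPn H; exfalso.
  case jS: (j \in S).
    by move: (H j jS); rewrite rho2_refl sqrtr_gt0 a0.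
  have : sepb (j |: S).
    apply/forall_inP => j1; rewrite in_setU1 => /predU1P [->|j1S];
      apply/forall_inP => k1; rewrite in_setU1 => /predU1P [->|k1S];
      apply/implyP => ne.
    - by rewrite eqxx in ne.
    - by have := H k1 k1S; rewrite -leNgt.
    - by have := H j1 j1S; rewrite -leNgt rho2_sym.
    - by move/forall_inP: sepS => /(_ j1 j1S) /forall_inP /(_ k1 k1S) /implyP; apply.
  move/maxS; rewrite cardsU1 jS /=.
  by rewrite add1n ltnn.
pose c j := odflt j [pick k in S | rho2 rho (phi j) (phi k) < Num.sqrt a].
have hc : forall j, c j \in S /\ rho2 rho (phi j) (phi (c j)) < Num.sqrt a.
  move=> j; rewrite /c; case: pickP => [k /andP [] //|H].
  have := hex j; move/exists_inP => [k kS hk]; exfalso.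
  by have := H k; rewrite kS hk.
pose code j v : 'I_K.+1 :=
  if rho (phi j v) (phi (c j) v) < e / 2 then ord0 else lift ord0 (idx (phi j v)).
pose f j := (c j, [ffun v => code j v]).
have finj : injective f.
  move=> j k [hcjk /ffunP hff].
  apply/eqP; apply/negPn/negP => /sep; apply/negP; rewrite -ltNge.
  apply: rhoinf_lt e0 _ => v.
  have := hff v; rewrite !ffunE /code -hcjk.
  case: ifP => hj; case: ifP => hk.
  - move=> _; apply: le_lt_trans (rho_tri _ (phi (c j) v) _) _.
    rewrite (rho_sym (phi (c j) v)); apply: lt_le_trans (ltrD hj hk) _.
    by rewrite -splitr.
  - by move=> h; exfalso; move: (neq_lift ord0 (idx (phi k v))); rewrite -h eqxx.
  - by move=> h; exfalso; move: (neq_lift ord0 (idx (phi j v))); rewrite h eqxx.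
  - by move/lift_inj/hidx.
pose G := [pred g : {ffun D -> 'I_K.+1} | (#|[pred v | g v != ord0]|%:R < kap * #|D|%:R)].
have hsub : ((f @: [set: 'I_N]) \subset finset.setX S [set g in G])%SET.
  apply/fintype.subsetP => _ /imsetP [j _ ->]; rewrite finset.in_setX (hc j).1 inE /=.
  rewrite inE /=.
  have -> : #|[pred v | [ffun v => code j v] v != ord0]| =
            #|[pred v | ~~ (rho (phi j v) (phi (c j) v) < e / 2)]|.
    apply: eq_card => v; rewrite !inE ffunE /code.
    by case: ifP.
  set B := [pred v | _].
  have h1 : #|B|%:R * (e / 2) ^+ 2 <= \sum_v rho (phi j v) (phi (c j) v) ^+ 2.
    rewrite mulr_natl -sumr_const.
    apply: le_trans (_ : \sum_(v in B) rho (phi j v) (phi (c j) v) ^+ 2 <= _).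
      apply: ler_sum => v hv.
      have {}hv : e / 2 <= rho (phi j v) (phi (c j) v) by move: hv; rewrite inE /= leNgt.
      by rewrite ler_pXn2r // nnegrE ?rho_ge0 // ltW.
    rewrite [X in _ <= X](bigID (mem B)) /= lerDl.
    by apply: sumr_ge0 => v _; rewrite exprn_ge0.
  have h2 : \sum_v rho (phi j v) (phi (c j) v) ^+ 2 < a * #|D|%:R.
    have := (hc j).2; rewrite /rho2 ltr_sqrt // mulrC ltr_pdivrMr //.
  have := le_lt_trans h1 h2.
  move=> h; rewrite -(ltr_pM2r (exprn_gt0 2 e20)).
  by apply: lt_le_trans h _; rewrite /a mulrAC.
have hN : (N <= #|S| * #|G|)%N.
  have := subset_leq_card hsub; rewrite card_imset // cardsX cardsT card_ord.
  by rewrite cardsE.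
have hG : (#|G|%:R : R) <= expR (eta * #|D|%:R).
  apply: le_trans (count_G D K kap t0) _.
  apply: le_trans (_ : _ <= expR (t * kap * #|D|%:R) * expR (K%:R * expR (- t)) ^+ #|D|) _.
    apply: ler_wpM2l; first exact: ltW (expR_gt0 _).
    apply: lerXn2r; rewrite ?nnegrE ?expR_ge1Dx //.
  rewrite -expRM_natr -expRD ler_expR -mulrDl ler_pM2r //.
  have -> : t * kap = eta / 2.
    by rewrite /kap; field; rewrite gt_eqF.
  suff : K%:R * expR (- t) <= eta / 2 by move=> h; lra.
  rewrite expRN ler_pdivrMr ?expR_gt0 //.
  apply: le_trans (_ : _ <= eta / 2 * (1 + t)) _; last first.
    by rewrite ler_wpM2l ?expR_ge1Dx // divr_ge0 ?ltW.
  have -> : eta / 2 * (1 + t) = K%:R + eta.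
    by rewrite /t; field; rewrite gt_eqF.
  by rewrite lerDl ltW.
exists S; split.
  move=> j k jS kS ne.
  by move/forall_inP: sepS => /(_ j jS) /forall_inP /(_ k kS) /implyP; apply.
apply: le_trans (_ : (#|S| * #|G|)%:R <= _); first by rewrite ler_nat.
by rewrite natrM ler_wpM2l ?ler0n.
Qed.
Lemma sep_ge0 (D : finType) (Z : set (D -> X)) (d : (D -> X) -> (D -> X) -> R) e :
  (0 <= sep_number Z d e)%E.
Proof.
apply: ereal_sup_ubound; exists 0%N => //.
have f0 : 'I_0 -> D -> X by case => m; rewrite ltn0.
by exists f0; split => j; exfalso; move: (ltn_ord j); rewrite ltn0.
Qed.

Lemma sep_mono (D : finType) (Z : set (D -> X)) e : (0 < #|D|)%N ->
  (sep_number Z (@rho2 R X rho D) e <= sep_number Z (@rhoinf R X rho D) e * 1%:E)%E.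
Proof.
move=> D0; rewrite mule1; apply: le_ereal_sup => _ [n [phi [Zp sp]] <-].
exists n => //; exists phi; split => // j k jk.
exact: le_trans (sp j k jk) (rho2_le_inf _ _ D0).
Qed.

Lemma sep_bound (e eta : R) : 0 < e -> 0 < eta -> compact [set: X] ->
  exists2 e' : R, 0 < e' & forall (D : finType) (Z : set (D -> X)), (0 < #|D|)%N ->
  (sep_number Z (@rhoinf R X rho D) e <=
     sep_number Z (@rho2 R X rho D) e' * (expR (eta * #|D|%:R))%:E)%E.
Proof.
move=> e0 eta0 cpt; have [e' e'0 H] := core e0 eta0 cpt.
exists e' => // D Z D0.
apply: ge_ereal_sup => _ [n [phi [Zphi sepphi]] <-].
have [S [sepS hN]] := H D n phi D0 sepphi.
pose psi (i : 'I_#|S|) := phi (enum_val i).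
have hS : ((#|S|%:R)%:E <= sep_number Z (@rho2 R X rho D) e')%E.
  apply: ereal_sup_ubound; exists #|S| => //; exists psi; split.
    by move=> j; apply: Zphi.
  move=> j k jk; apply: sepS; rewrite ?enum_valP //.
  by apply: contra jk => /eqP /enum_val_inj ->.
apply: le_trans (_ : ((#|S|%:R)%:E * (expR (eta * #|D|%:R))%:E <= _)%E).
  by rewrite -EFinM lee_fin.
by apply: lee_wpmul2r => //; rewrite lee_fin ltW // expR_gt0.
Qed.
End Rho.

Unset Implicit Arguments. Set Strict Implicit.

Theorem proposition4p3 (R : realType) (M : Type) (mul : M -> M -> M) (one : M)
  (X : topologicalType) (act : M -> X -> X) (rho : X -> X -> R)
  (I : Type) (le : I -> I -> Prop) (D : I -> finType)
  (sigma : forall i, M -> D i -> D i) :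
  is_monoid mul one ->
  compact [set: X] ->
  is_cont_action mul one act ->
  is_sofic_approx R mul one le sigma ->
  net_card_to_infty le D ->
  is_cont_pseudometric rho ->
  sofic_top_entropy act rho le sigma =
  sofic_entropy_with act rho le sigma (fun D' => @rho2 R X rho D').
Proof.
move=> _ cpt _ [_ Dpos _ _ _] _ [r0 rr rs rt rc].
have npos : forall i, (0 < (#|D i|%:R : R))%R by move=> i; rewrite ltr0n.
rewrite /sofic_top_entropy /sofic_entropy_with.
apply/eqP; rewrite eq_le; apply/andP; split.
- apply/lee_addgt0Pr => eta eta0.
  apply: ge_ereal_sup => _ [e e0 <-].
  have [e' e'0 H] := sep_bound r0 rr rs rt rc e0 eta0 cpt.
  apply: le_trans; last first.
    apply: leeD2r; apply: ereal_sup_ubound; exists e' => //.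
  refine (@inf_shift R (set M) _ (fun F => _) (fun F => _) eta _) => F _.
  refine (@inf_shift R R _ (fun dl => _) (fun dl => _) eta _) => dl _.
  apply: limsup_shift => i.
  apply: elog_step (npos i) (sep_ge0 _ _ _) (H _ _ (Dpos i)) (expR_gt0 _) _.
  by rewrite expRK.
- apply: ge_ereal_sup => _ [e e0 <-].
  apply: le_trans; last first.
    apply: ereal_sup_ubound; exists e => //.
  rewrite -[X in (_ <= X)%E]adde0.
  refine (@inf_shift R (set M) _ (fun F => _) (fun F => _) 0 _) => F _.
  refine (@inf_shift R R _ (fun dl => _) (fun dl => _) 0 _) => dl _.
  apply: limsup_shift => i.
  apply: elog_step (npos i) (sep_ge0 _ _ _) (sep_mono r0 _ _ (Dpos i)) ltr01 _.
  by rewrite ln1 mul0r.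
Qed.
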